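(* Let $X$, $Y_k$ ($k\in\mathbb N$) and norms $\|\cdot\|_{X\oplus Y_k}$ be as in the generalized $\ell^2$-sum setting, and let $k\in\mathbb N$. Then: (i) for $x\in X$, $y_k\in Y_k$: $\|x+y_k\|_\Sigma=\|x+y_k\|_{X\oplus Y_k}$; (ii) for $x^*\in X^*$, $y_k^*\in Y_k^*$: $\|x^*+y_k^*\|_\Sigma=\|x^*+y_k^*\|_{X\oplus Y_k}$, where the left side is the dual norm of $\|\cdot\|_\Sigma$; (iii) for $x^*\in X^*$: $\|x^*\|_\Sigma=\|x^*\|_X$.
   Context: Setting: $(X,\|\cdot\|_X)$ and $(Y_k,\|\cdot\|_{Y_k})$, $k\in\mathbb N$, are Banach spaces; for each $k$, $\|\cdot\|_{X\oplus Y_k}$ is a norm on $X\oplus Y_k$ coinciding with $\|\cdot\|_X$ on $X$ and with $\|\cdot\|_{Y_k}$ on $Y_k$, and monotone: $\|x+y_k\|_{X\oplus Y_k}\ge\|x\|_X$. Duals of direct sums are identified with direct sums of duals via $(x^*+y^* )(x+y)=x^*(x)+y^*(y)$ (so a functional on a summand is regarded as a functional on the whole sum, vanishing on the other summands). $\Lambda(X\oplus Y_k)$ is the set of functionals $x^*+\sum_k\alpha_ky_k^*$ with $x^*\in X^*$, $y_k^*\in Y_k^*$, $\|x^*+y_k^*\|_{X\oplus Y_k}\le1$ for all $k$, $0\le\alpha_k\le1$, $\sum\alpha_k^2\le1$. $\Sigma(X\oplus Y_k)=\{x+y_1+y_2+\dots:x\in X,y_k\in Y_k,\sum\|y_k\|_{Y_k}^2<\infty\}$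 with $\|z\|_\Sigma=\sup\{|z^*(z)|:z^*\in\Lambda(X\oplus Y_k)\}$; the dual norm is also denoted $\|\cdot\|_\Sigma$. *)

(* Defs.v *)
From HB Require Import structures.
From mathcomp Require Import all_boot all_order all_algebra.
From mathcomp Require Import all_classical all_reals all_analysis.
From Stdlib Require Import PeanoNat.
Set Implicit Arguments. Unset Strict Implicit. Unset Printing Implicit Defensive.
Import Order.TTheory GRing.Theory Num.Theory.
Import numFieldNormedType.Exports.
Local Open Scope classical_set_scope.
Local Open Scope ring_scope.

(* Real Banach spaces are [completeNormedModType R], [R : realType]. *)

Definition is_dual {R : realType} {V : normedModType R} (f : V -> R) : Prop :=
  (forall (a : R) (u v : V), f (a *: u + v) = a * f u + f v) /\ continuous f.

Definition dnorm {R : realType} {V : normedModType R} (f : V -> R) : \bar R :=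
  ereal_sup [set (`|f v|)%:E | v in [set v : V | `|v| <= 1]].

(* N is a norm on X (+) Y, written as a function of the pair (x,y) = x + y,
   coinciding with the norms of X and Y on the summands, and monotone. *)
Definition sum_norm {R : realType} {X Y : normedModType R} (N : X -> Y -> R) : Prop :=
  [/\ (forall x y, N x y = 0 -> x = 0 /\ y = 0),
      (forall (a : R) x y, N (a *: x) (a *: y) = `|a| * N x y),
      (forall x x' y y', N (x + x') (y + y') <= N x y + N x' y') &
    [/\ (forall x, N x 0 = `|x|),
      (forall y, N 0 y = `|y|) &
      (forall x y, `|x| <= N x y)]].

Definition dnorm_sum {R : realType} {X Y : normedModType R} (N : X -> Y -> R)
  (xs : X -> R) (ys : Y -> R) : \bar R :=
  ereal_sup [set (`|xs xy.1 + ys xy.2|)%:E | xy in [set xy : X * Y | N xy.1 xy.2 <= 1]].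

Section Sigma.
Context {R : realType} {X : normedModType R} {Y : nat -> normedModType R}.

(* elements of Sigma(X (+) Y_k): x + y_1 + y_2 + ..., encoded as (x, (y_k)_k) *)
Definition l2fam (y : forall k, Y k) : Prop :=
  (\sum_(k <oo) ((`|y k| ^+ 2)%:E) < +oo)%E.

Definition in_Sigma (z : X * (forall k, Y k)) : Prop := l2fam z.2.

(* the family with y in slot k and 0 elsewhere, i.e. the element x + y_k *)
Definition single (k : nat) (y : Y k) : forall j, Y j :=
  fun j => match PeanoNat.Nat.eq_dec k j with
           | left e => eq_rect k Y y j e
           | right _ => 0
           end.

(* Lambda(X (+) Y_k): functionals xs + sum_k alpha_k ys_k, encoded as
   the triple (xs, (ys k)_k, (alpha k)_k) *)
Definition in_Lambda (N : forall k, X -> Y k -> R)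
  (L : (X -> R) * (forall k, Y k -> R) * (nat -> R)) : Prop :=
  let: (xs, ys, a) := L in
  [/\ is_dual xs,
      (forall k, is_dual (ys k)),
      (forall k, (dnorm_sum (N k) xs (ys k) <= 1)%E),
      (forall k, 0 <= a k <= 1) &
      (\sum_(k <oo) ((a k ^+ 2)%:E) <= 1)%E].

Definition Lambda_eval (L : (X -> R) * (forall k, Y k -> R) * (nat -> R))
  (z : X * (forall k, Y k)) : R :=
  let: (xs, ys, a) := L in
  xs z.1 + limn (series (fun k => a k * ys k (z.2 k))).

Definition Sigma_norm (N : forall k, X -> Y k -> R) (z : X * (forall k, Y k)) : \bar R :=
  ereal_sup [set (`|Lambda_eval L z|)%:E | L in in_Lambda N].

Definition Sigma_dnorm (N : forall k, X -> Y k -> R)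
  (f : X * (forall k, Y k) -> R) : \bar R :=
  ereal_sup [set (`|f z|)%:E | z in [set z | in_Sigma z /\ (Sigma_norm N z <= 1)%E]].

End Sigma.

(* Main.v *)
Require Import Defs.
From HB Require Import structures.
From mathcomp Require Import all_boot all_order all_algebra.
From mathcomp Require Import all_classical all_reals all_analysis.
From mathcomp Require Import ring lra.
Import Order.TTheory GRing.Theory Num.Theory.
Import numFieldNormedType.Exports.
Local Open Scope classical_set_scope.
Local Open Scope ring_scope.
Set Implicit Arguments. Unset Strict Implicit. Unset Printing Implicit Defensive.

Section HahnBanach.
Context {R : realType} {V : lmodType R}.

Definition sublin (q : V -> R) :=
  (forall x y, q (x + y) <= q x + q y) /\
  (forall (s : R) x, 0 <= s -> q (s *: x) = s * q x).

Lemma sublin0 q : sublin q -> q 0 = 0.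
Proof. by case=> _ h; rewrite -(scale0r (0 : V)) h // mul0r. Qed.

Lemma sublinN q : sublin q -> forall x, - q (- x) <= q x.
Proof.
move=> hq x; have := hq.1 x (- x); rewrite subrr sublin0 //.
by move=> h; rewrite lerNl -subr_ge0 opprK addrC.
Qed.

Definition Tf (m : V -> R) (y : V) (x : V) : R :=
  inf [set m (x + t *: y) - t * m y | t in [set t : R | 0 <= t]].

Lemma Tf_lbound (m : V -> R) (y x : V) : sublin m -> forall t, 0 <= t ->
  - m (- x) <= m (x + t *: y) - t * m y.
Proof.
move=> hm t t0; rewrite -hm.2 //.
have := hm.1 (x + t *: y) (- x); rewrite addrC addKr => h.
lra.
Qed.

Lemma Tf_ne (m : V -> R) (y x : V) : [set m (x + t *: y) - t * m y | t in [set t : R | 0 <= t]] !=set0.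
Proof. exists (m (x + 0 *: y) - 0 * m y); exists 0 => //=. Qed.

Lemma Tf_hlb (m : V -> R) (y x : V) : sublin m ->
  has_lbound [set m (x + t *: y) - t * m y | t in [set t : R | 0 <= t]].
Proof.
move=> hm; exists (- m (- x)) => _ [t t0 <-]; exact: Tf_lbound.
Qed.

Lemma Tf_le m y x t : sublin m -> 0 <= t -> Tf m y x <= m (x + t *: y) - t * m y.
Proof.
move=> hm t0; have H := ge_inf (Tf_hlb y x hm).
apply: H; by exists t.
Qed.

Lemma Tf_ge m y x : sublin m -> - m (- x) <= Tf m y x.
Proof.
move=> hm; apply: lb_le_inf; first exact: Tf_ne.
by move=> _ [t t0 <-]; exact: Tf_lbound.
Qed.

Lemma Tf_lem m y x : sublin m -> Tf m y x <= m x.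
Proof. by move=> hm; have := Tf_le y x hm (lexx 0); rewrite scale0r addr0 mul0r subr0. Qed.

Lemma Tf_key m y x : sublin m -> Tf m y x <= m (x + y) - m y.
Proof. by move=> hm; have := Tf_le y x hm ler01; rewrite scale1r mul1r. Qed.

Lemma Tf_sublin m y : sublin m -> sublin (Tf m y).
Proof.
move=> hm; split.
- move=> x1 x2.
  have H : forall t1 t2, 0 <= t1 -> 0 <= t2 -> Tf m y (x1 + x2) <=
     (m (x1 + t1 *: y) - t1 * m y) + (m (x2 + t2 *: y) - t2 * m y).
    move=> t1 t2 t10 t20; apply: le_trans (Tf_le y _ hm (addr_ge0 t10 t20)) _.
    have -> : x1 + x2 + (t1 + t2) *: y = (x1 + t1 *: y) + (x2 + t2 *: y).
      by rewrite scalerDl addrACA.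
    have := hm.1 (x1 + t1 *: y) (x2 + t2 *: y); lra.
  have H1 : forall t2, 0 <= t2 -> Tf m y (x1 + x2) - (m (x2 + t2 *: y) - t2 * m y) <= Tf m y x1.
    move=> t2 t20; apply: lb_le_inf; first exact: Tf_ne.
    move=> _ [t1 t10 <-]; have := H t1 t2 t10 t20; lra.
  have : Tf m y (x1 + x2) - Tf m y x1 <= Tf m y x2.
    apply: lb_le_inf; first exact: Tf_ne.
    move=> _ [t2 t20 <-]; have := H1 t2 t20; lra.
  lra.
- move=> s x s0; have [->|sgt0] := eqVneq s 0.
    rewrite scale0r mul0r; apply/eqP; rewrite eq_le; apply/andP; split.
      have := Tf_lem y (0 : V) hm; rewrite (sublin0 hm); exact.
    have := Tf_ge y (0 : V) hm; rewrite oppr0 (sublin0 hm) oppr0; exact.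
  have sp : 0 < s by rewrite lt_def sgt0 s0.
  apply/eqP; rewrite eq_le; apply/andP; split.
    rewrite -ler_pdivrMl //; apply: lb_le_inf; first exact: Tf_ne.
    move=> _ [t t0 <-]; rewrite ler_pdivrMl //.
    have := Tf_le y (s *: x) hm (mulr_ge0 s0 t0).
    by rewrite -scalerA -scalerDr hm.2 // mulrBr mulrA.
  apply: lb_le_inf; first exact: Tf_ne.
  move=> _ [t t0 <-]; rewrite -ler_pdivlMl //.
  have := Tf_le y x hm (divr_ge0 t0 s0).
  have -> : s *: x + t *: y = s *: (x + (t / s) *: y).
    by rewrite scalerDr scalerA mulrCA divff // mulr1.
  rewrite hm.2 ?divr_ge0 // => h; rewrite mulrC; apply: le_trans h _.
  by rewrite [X in _ <= X]mulrBl [s * _ / s]mulrC mulKf // [t * _ / s]mulrAC.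
Qed.

Lemma sublin_inf (P : (V -> R) -> Prop) (q0 : V -> R) (A : set {q : V -> R | P q}) a0 :
  (forall c : {q : V -> R | P q}, sublin (sval c) /\ forall x, sval c x <= q0 x) ->
  total_on A (fun a b => forall x, sval b x <= sval a x) -> A a0 ->
  let iq := fun x => inf [set sval c x | c in A] in
  sublin iq /\ (forall x, iq x <= q0 x) /\ (forall c, A c -> forall x, iq x <= sval c x).
Proof.
move=> hP htot Aa0 iq.
have ne : forall x, [set sval c x | c in A] !=set0.
  by move=> x; exists (sval a0 x); exists a0.
have hlb : forall x, has_lbound [set sval c x | c in A].
  move=> x; exists (- q0 (- x)) => _ [c Ac <-].
  have [hs hq] := hP c; have := sublinN hs x; have := hq (- x); lra.
have iq_le : forall c, A c -> forall x, iq x <= sval c x.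
  move=> c Ac x; have H := ge_inf (hlb x); apply: H; by exists c.
have iq_ge : forall b x, (forall c, A c -> b <= sval c x) -> b <= iq x.
  move=> b x H; apply: lb_le_inf; first exact: ne.
  by move=> _ [c Ac <-]; exact: H.
split; last split.
- split.
  + move=> x y.
    have H : forall c1 c2, A c1 -> A c2 -> iq (x + y) <= sval c1 x + sval c2 y.
      move=> c1 c2 A1 A2; have [h12|h21] := htot c1 c2 A1 A2.
      * apply: le_trans (iq_le c2 A2 _) _; apply: le_trans ((hP c2).1.1 x y) _.
        by rewrite lerD2r.
      * apply: le_trans (iq_le c1 A1 _) _; apply: le_trans ((hP c1).1.1 x y) _.
        by rewrite lerD2l.
    have H1 : forall c2, A c2 -> iq (x + y) - sval c2 y <= iq x.
      by move=> c2 A2; apply: iq_ge => c1 A1; have := H c1 c2 A1 A2; lra.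
    have : iq (x + y) - iq x <= iq y.
      by apply: iq_ge => c2 A2; have := H1 c2 A2; lra.
    lra.
  + move=> s x s0; have [->|sgt0] := eqVneq s 0.
      rewrite scale0r mul0r; apply/eqP; rewrite eq_le; apply/andP; split.
        by apply: le_trans (iq_le a0 Aa0 0) _; rewrite (sublin0 (hP a0).1).
      by apply: iq_ge => c Ac; rewrite (sublin0 (hP c).1).
    have sp : 0 < s by rewrite lt_def sgt0 s0.
    apply/eqP; rewrite eq_le; apply/andP; split.
      rewrite -ler_pdivrMl //; apply: iq_ge => c Ac.
      rewrite ler_pdivrMl // -(hP c).1.2 //; exact: iq_le.
    apply: iq_ge => c Ac.
    rewrite (hP c).1.2 // ler_pM2l //; exact: iq_le.
- by move=> x; apply: le_trans (iq_le a0 Aa0 x) _; exact: (hP a0).2.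
- exact: iq_le.
Qed.

Theorem hahn_banach (p : V -> R) : sublin p -> forall v0 : V,
  exists f : V -> R, (forall a u v, f (a *: u + v) = a * f u + f v) /\
    (forall v, f v <= p v) /\ f v0 = p v0.
Proof.
move=> hp v0.
pose q0 := Tf p v0.
have q0s : sublin q0 := Tf_sublin v0 hp.
pose P q := sublin q /\ forall x, q x <= q0 x.
pose T := {q : V -> R | P q}.
have hT : forall c : T, sublin (sval c) /\ forall x, sval c x <= q0 x.
  by move=> [c pc].
pose Rl := fun a b : T => `[< forall x, sval b x <= sval a x >].
have t0 : T by exists q0; split => //.
have [m mmax] : exists t, premaximal Rl t.
  apply: (@ZL_preorder T t0 Rl).
  - by move=> t; apply/asboolP.
  - move=> a b c /asboolP hab /asboolP hbc; apply/asboolP => x.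
  exact: le_trans (hbc x) (hab x).
  move=> A hA.
  have [[a0 Aa0]|nA] := pselect (exists a0, A a0); last first.
    by exists t0 => s As; exfalso; apply: nA; exists s.
  have htot : total_on A (fun a b => forall x, sval b x <= sval a x).
    by move=> a b Aa Ab; case: (hA a b Aa Ab) => /asboolP; [left|right].
  have [iqs [iqle iqc]] := sublin_inf hT htot Aa0.
  by exists (exist P _ (conj iqs iqle)) => c Ac; apply/asboolP => x; exact: iqc.
have [ms mle] := hT m.
have add : forall x y, sval m x + sval m y <= sval m (x + y).
  move=> x y.
  have Ps : P (Tf (sval m) y).
    split; first exact: Tf_sublin.
    by move=> z; apply: le_trans (Tf_lem y z ms) (mle z).
  have /asboolP h := mmax (exist P _ Ps) (asboolT (fun z => Tf_lem y z ms)).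
  have := h x; have := Tf_key y x ms; lra.
have addm : forall x y, sval m (x + y) = sval m x + sval m y.
  by move=> x y; apply/eqP; rewrite eq_le add andbT ms.1.
have oppm : forall x, sval m (- x) = - sval m x.
  move=> x; have := addm x (- x); rewrite subrr (sublin0 ms); lra.
exists (sval m); split; last split.
- move=> a u v; rewrite addm; congr (_ + _).
  have [a0|a0] := leP 0 a; first by rewrite ms.2.
  have -> : a *: u = - ((- a) *: u) by rewrite scaleNr opprK.
  rewrite oppm ms.2; first lra.
  by rewrite oppr_ge0 ltW.
- move=> v; apply: le_trans (mle v) _; exact: Tf_lem.
- apply/eqP; rewrite eq_le; apply/andP; split.
    by apply: le_trans (mle v0) _; exact: Tf_lem.
  have := mle (- v0); have := Tf_key v0 (- v0) hp.
  rewrite addNr (sublin0 hp) oppm; lra.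
Qed.
End HahnBanach.
Section Aux.
Context {R : realType}.

Lemma dual_lin {V : normedModType R} (f : V -> R) : is_dual f ->
  [/\ f 0 = 0, (forall a u, f (a *: u) = a * f u),
      (forall u v, f (u + v) = f u + f v) & (forall u, f (- u) = - f u)].
Proof.
case=> hl _.
have f0 : f 0 = 0.
  by have := hl (-1) 0 0; rewrite scaler0 addr0 mulN1r addNr.
have fZ : forall a u, f (a *: u) = a * f u.
  by move=> a u; have := hl a u 0; rewrite !addr0 f0 addr0.
split => //.
- by move=> u v; have := hl 1 u v; rewrite scale1r mul1r.
- by move=> u; rewrite -scaleN1r fZ mulN1r.
Qed.

Lemma dual0 {V : normedModType R} : is_dual (fun _ : V => (0 : R)).
Proof. by split; [move=> *; rewrite mulr0 addr0 | exact: cst_continuous]. Qed.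

Lemma dual_scale {V : normedModType R} (f : V -> R) (c : R) :
  is_dual f -> is_dual (fun u => f u * c).
Proof.
move=> hf; split.
  by move=> a u v; rewrite hf.1 mulrDl mulrA.
move=> u; apply: cvgM; [exact: hf.2 | exact: cvg_cst].
Qed.

Lemma lip_cont {V : normedModType R} (f : V -> R) :
  (forall u v, f (u - v) = f u - f v) -> (forall u, `|f u| <= `|u|) -> continuous f.
Proof.
move=> fB fb x; apply/cvgrPdist_lt => e e_gt0; near=> z.
rewrite -fB; apply: le_lt_trans (fb _) _.
near: z; exact: cvgr_dist_lt.
Unshelve. all: by end_near. Qed.

Lemma series_single (u : nat -> R) (k : nat) :
  (forall j, j != k -> u j = 0) -> limn (series u) = u k.
Proof.
move=> hu; apply: cvg_lim => //; apply: cvg_near_cst; near=> n.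
have hn : (k < n)%N by near: n; exists k.+1 => // m /=.
rewrite /series /= (bigD1_seq k) ?mem_index_iota ?iota_uniq //= big1_seq ?addr0 //.
by move=> j /andP[jk _]; exact: hu.
Unshelve. all: by end_near.
Qed.

Lemma eseries_single (u : nat -> R) (k : nat) :
  (forall j, j != k -> u j = 0) -> (\sum_(j <oo) (u j)%:E = (u k)%:E)%E.
Proof.
move=> hu; apply: cvg_lim => //; apply: cvg_near_cst; near=> n.
have hn : (k < n)%N by near: n; exists k.+1 => // m /=.
rewrite (bigD1_seq k) ?mem_index_iota ?iota_uniq //= big1_seq ?adde0 //.
by move=> j /andP[jk _]; rewrite hu.
Unshelve. all: by end_near.
Qed.

End Aux.
From Stdlib Require Import Eqdep_dec PeanoNat.

Unset Implicit Arguments.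
Section Main.
Context {R : realType} {X : normedModType R} {Y : nat -> normedModType R}.
Variable N : forall k, X -> Y k -> R.
Hypothesis hN : forall k, sum_norm (N k).

Definition famf (k : nat) (ys : Y k -> R) : forall j, Y j -> R :=
  fun j => match Nat.eq_dec k j with
           | left e => eq_rect k (fun j => Y j -> R) ys j e
           | right _ => fun _ => 0
           end.

Definition ind (k j : nat) : R := if j == k then 1 else 0.

Lemma famf_k (k : nat) (ys : Y k -> R) : famf k ys k = ys.
Proof.
rewrite /famf; case: (Nat.eq_dec k k) => [e|//].
by rewrite (UIP_refl_nat _ e).
Qed.

Lemma famf_ne k (ys : Y k -> R) j : j != k -> famf k ys j = fun _ => 0.
Proof.
move=> jk; rewrite /famf; case: (Nat.eq_dec k j) => [e|//].
by subst j; rewrite eqxx in jk.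
Qed.

Lemma single_k k (y : Y k) : single y k = y.
Proof.
rewrite /single; case: (Nat.eq_dec k k) => [e|//].
by rewrite (UIP_refl_nat _ e).
Qed.

Lemma single_ne k (y : Y k) j : j != k -> single y j = 0.
Proof.
move=> jk; rewrite /single; case: (Nat.eq_dec k j) => [e|//].
by subst j; rewrite eqxx in jk.
Qed.

Lemma N_ge0 k x y : 0 <= N k x y.
Proof. by case: (hN k) => _ _ _ [_ _ h]; apply: le_trans (h x y). Qed.

Lemma N_scale k a x y : N k (a *: x) (a *: y) = `|a| * N k x y.
Proof. by case: (hN k). Qed.

Lemma dual_bound k (xs : X -> R) (ys : Y k -> R) :
  is_dual xs -> is_dual ys -> (dnorm_sum (N k) xs ys <= 1)%E ->
  forall x y, `|xs x + ys y| <= N k x y.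
Proof.
move=> hx hy hd x y.
have [x0 xZ xD xN] := dual_lin hx; have [y0 yZ yD yN] := dual_lin hy.
have [Nxy0|Npos] := eqVneq (N k x y) 0.
  case: (hN k) => h _ _ _; have [-> ->] := h _ _ Nxy0.
  by rewrite x0 y0 addr0 normr0 N_ge0.
have cp : 0 < N k x y by rewrite lt_def Npos N_ge0.
set c := N k x y in cp Npos *.
have h1 : N k (c^-1 *: x) (c^-1 *: y) <= 1.
  rewrite N_scale ger0_norm; last by rewrite invr_ge0 ltW.
  by rewrite -/c mulVf.
have := le_trans (ereal_sup_ubound (ex_intro2 _ _ (c^-1 *: x, c^-1 *: y) h1 erefl)) hd.
rewrite lee_fin /= xZ yZ -mulrDr normrM ger0_norm; last by rewrite invr_ge0 ltW.
by rewrite ler_pdivrMl // mulr1.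
Qed.

Lemma dual_boundX k (xs : X -> R) (ys : Y k -> R) :
  is_dual xs -> is_dual ys -> (dnorm_sum (N k) xs ys <= 1)%E ->
  forall x, `|xs x| <= `|x|.
Proof.
move=> hx hy hd x; have := dual_bound k xs ys hx hy hd x 0.
have [y0 _ _ _] := dual_lin hy; rewrite y0 addr0.
by case: (hN k) => _ _ _ [-> _ _].
Qed.


Lemma pair_add k (a c : X) (b d : Y k) : ((a, b) + (c, d) : (X * Y k)%type) = (a + c, b + d).
Proof. by []. Qed.
Lemma pair_scale k (s : R) (a : X) (b : Y k) : (s *: (a, b) : (X * Y k)%type) = (s *: a, s *: b).
Proof. by []. Qed.

Lemma eq_le_tmp (a b : R) : a = b -> `|b| <= `|a|.
Proof. by move=> ->. Qed.

Lemma build_L k (xs : X -> R) (ys : Y k -> R) : is_dual xs -> is_dual ys ->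
  (forall x y, N k x y <= 1 -> `|xs x + ys y| <= 1) ->
  in_Lambda N (xs, famf k ys, ind k) /\
  forall z, Lambda_eval (xs, famf k ys, ind k) z = xs z.1 + ys (z.2 k).
Proof.
move=> hx hy H; have [y0 _ _ _] := dual_lin hy.
split.
- split => //.
  + move=> j; have [->|jk] := eqVneq j k; first by rewrite famf_k.
    by rewrite famf_ne //; exact: dual0.
  + move=> j; have [ejk|jk] := eqVneq j k.
      subst j; rewrite famf_k; apply: ge_ereal_sup => _ [[x y] /= hxy <-].
      by rewrite lee_fin; exact: H.
    rewrite famf_ne //; apply: ge_ereal_sup => _ [[x y] /= hxy <-].
    rewrite lee_fin addr0; have := H x 0; rewrite y0 addr0; apply.
    case: (hN k) => _ _ _ [-> _ _]; apply: le_trans hxy.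
    by case: (hN j) => _ _ _ [_ _ ->].
  + by move=> j; rewrite /ind; case: (j == k); rewrite ?ler01 ?lexx.
  + rewrite (@eseries_single _ (fun j => ind k j ^+ 2) k).
      by rewrite /ind eqxx expr1n.
    by move=> j jk; rewrite /ind (negbTE jk) expr0n.
- move=> z; rewrite /Lambda_eval /=; congr (_ + _).
  rewrite (@series_single _ _ k); first by rewrite /ind eqxx mul1r famf_k.
  by move=> j jk; rewrite /ind (negbTE jk) mul0r.
Qed.

Lemma part1 k (x : X) (y : Y k) : Sigma_norm N (x, single y) = (N k x y)%:E.
Proof.
apply/eqP; rewrite eq_le; apply/andP; split.
- apply: ge_ereal_sup => _ [[[xs ys] a] hL <-]; case: hL => hx hy hd ha hsum.
  rewrite lee_fin /Lambda_eval /=.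
  rewrite (@series_single _ _ k); last first.
    move=> j jk; rewrite single_ne //.
    by have [-> _ _ _] := dual_lin (hy j); rewrite mulr0.
  rewrite single_k.
  have hb := dual_bound k xs (ys k) hx (hy k) (hd k) x y.
  have hbx := dual_boundX k xs (ys k) hx (hy k) (hd k) x.
  have mono : `|x| <= N k x y by case: (hN k) => _ _ _ [_ _ ->].
  have /andP[a0 a1] := ha k.
  rewrite (_ : xs x + a k * ys k y = a k * (xs x + ys k y) + (1 - a k) * xs x);
    last by ring.
  apply: le_trans (ler_normD _ _) _.
  rewrite !normrM (ger0_norm a0) (ger0_norm (x := 1 - a k)) ?subr_ge0 //.
  nra.
pose p := fun v : (X * Y k)%type => N k v.1 v.2.
have hp : sublin p.
  split.
    by move=> u v; case: (hN k) => _ _ htri _; exact: htri.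
  by move=> s u s0; rewrite /p /= N_scale ger0_norm.
have [f [fl [fp fv0]]] := hahn_banach hp (x, y).
have f0 : f 0 = 0 by have := fl (-1) 0 0; rewrite scaler0 addr0 mulN1r addNr.
have fD : forall u v, f (u + v) = f u + f v.
  by move=> u v; have := fl 1 u v; rewrite scale1r mul1r.
have fZ : forall a u, f (a *: u) = a * f u.
  by move=> a u; have := fl a u 0; rewrite !addr0 f0 addr0.
have fabs : forall v, `|f v| <= p v.
  move=> v; rewrite ler_norml fp andbT lerNl.
  have := fp (- v); rewrite -scaleN1r fZ mulN1r /p /=.
  by rewrite N_scale normrN normr1 mul1r.
pose xs := fun u : X => f (u, 0).
pose ys := fun w : Y k => f (0, w).
have fsplit : forall u w, f (u, w) = xs u + ys w.
  move=> u w; rewrite /xs /ys -fD; congr f.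
  by rewrite pair_add addr0 add0r.
have dx : is_dual xs.
  split.
    move=> a u v; rewrite /xs -fZ -fD; congr f.
    by rewrite pair_scale pair_add scaler0 addr0.
  apply: lip_cont.
    move=> u v; rewrite /xs -[- f (v, 0)]mulN1r -fZ -fD; congr f.
    by rewrite pair_scale pair_add scaler0 addr0 scaleN1r.
  move=> u; apply: le_trans (fabs _) _; rewrite /p /=.
  by case: (hN k) => _ _ _ [-> _ _].
have dy : is_dual ys.
  split.
    move=> a u v; rewrite /ys -fZ -fD; congr f.
    by rewrite pair_scale pair_add scaler0 addr0.
  apply: lip_cont.
    move=> u v; rewrite /ys -[- f (0, v)]mulN1r -fZ -fD; congr f.
    by rewrite pair_scale pair_add scaler0 addr0 scaleN1r.
  move=> u; apply: le_trans (fabs _) _; rewrite /p /=.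
  by case: (hN k) => _ _ _ [_ -> _].
have [hL hE] := build_L k xs ys dx dy
  (fun u w h => le_trans (eq_le_tmp _ _ (fsplit u w)) (le_trans (fabs (u, w)) h)).
apply: ereal_sup_ubound; exists (xs, famf k ys, ind k) => //.
rewrite hE /= single_k -fsplit fv0 /p /= ger0_norm //; exact: N_ge0.
Qed.


Lemma part2 k (xs : X -> R) (ys : Y k -> R) : is_dual xs -> is_dual ys ->
  Sigma_dnorm N (fun z => xs z.1 + ys (z.2 k)) = dnorm_sum (N k) xs ys.
Proof.
move=> hx hy; have [x0 _ _ _] := dual_lin hx; have [y0 _ _ _] := dual_lin hy.
apply/eqP; rewrite eq_le; apply/andP; split; last first.
  apply: ge_ereal_sup => _ [[u v] /= huv <-]; apply: ereal_sup_ubound.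
  exists (u, single v); last by rewrite /= single_k.
  split; last by rewrite part1 lee_fin.
  rewrite /in_Sigma /l2fam /=.
  rewrite (@eseries_single _ (fun j => `|single v j| ^+ 2) k) ?ltey //.
  by move=> j jk; rewrite single_ne // normr0 expr0n.
have hd : forall u v, N k u v <= 1 -> ((`|xs u + ys v|)%:E <= dnorm_sum (N k) xs ys)%E.
  by move=> u v huv; apply: ereal_sup_ubound; exists (u, v).
have d0 : (0 <= dnorm_sum (N k) xs ys)%E.
  have := hd 0 0; rewrite x0 y0 addr0 normr0; apply.
  by case: (hN k) => _ _ _ [-> _ _]; rewrite normr0.
move: (dnorm_sum (N k) xs ys) hd d0 => d hd d0.
case: d hd d0 => [r | | ] hd d0; last by [].
- have r0 : 0 <= r by rewrite -lee_fin.
  apply/lee_addgt0Pr => e e0.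
  have cp : 0 < r + e by rewrite ltr_wpDl.
  have H : forall u v, N k u v <= 1 -> `|xs u * (r + e)^-1 + ys v * (r + e)^-1| <= 1.
    move=> u v huv; rewrite -mulrDl normrM (ger0_norm (x := (r + e)^-1)); last by rewrite invr_ge0 ltW.
    rewrite ler_pdivrMr // mul1r; apply: le_trans (_ : r <= r + e).
      by rewrite -lee_fin; exact: hd.
    by rewrite lerDl ltW.
  have [hL hE] := build_L k _ _ (dual_scale (r + e)^-1 hx) (dual_scale (r + e)^-1 hy) H.
  apply: ge_ereal_sup => _ [z [zS zn] <-].
  have := le_trans (ereal_sup_ubound (ex_intro2 _ _ _ hL erefl)) zn.
  rewrite hE /= lee_fin -mulrDl normrM (ger0_norm (x := (r + e)^-1)); last by rewrite invr_ge0 ltW.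
  by rewrite ler_pdivrMr // mul1r -EFinD lee_fin.
- by rewrite leey.
Qed.

Lemma part3 (k : nat) (xs : X -> R) : is_dual xs ->
  Sigma_dnorm N (fun z => xs z.1) = dnorm xs.
Proof.
move=> hx.
have e2 : Sigma_dnorm N (fun z => xs z.1) =
    Sigma_dnorm N (fun z => xs z.1 + (fun _ : Y k => (0 : R)) (z.2 k)).
  by congr Sigma_dnorm; apply: funext => z; rewrite addr0.
rewrite e2; apply: etrans (part2 k xs (fun _ : Y k => 0) hx dual0) _.
apply/eqP; rewrite eq_le; apply/andP; split.
  apply: ge_ereal_sup => _ [[u v] /= huv <-]; rewrite addr0.
  apply: ereal_sup_ubound; exists u => //=.
  apply: le_trans huv; by case: (hN k) => _ _ _ [_ _ ->].
apply: ge_ereal_sup => _ [u /= hu <-]; apply: ereal_sup_ubound.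
exists (u, 0); last by rewrite /= addr0.
by case: (hN k) => _ _ _ [h _ _]; rewrite /= h.
Qed.

End Main.

Theorem proposition2p4 (R : realType) (X : completeNormedModType R)
  (Y : nat -> completeNormedModType R) (N : forall k, X -> Y k -> R)
  (hN : forall k, sum_norm (N k)) (k : nat) :
  [/\ (forall (x : X) (y : Y k),
         Sigma_norm N (x, single y) = (N k x y)%:E),
      (forall (xs : X -> R) (ys : Y k -> R), is_dual xs -> is_dual ys ->
         Sigma_dnorm N (fun z => xs z.1 + ys (z.2 k)) = dnorm_sum (N k) xs ys) &
      (forall xs : X -> R, is_dual xs ->
         Sigma_dnorm N (fun z => xs z.1) = dnorm xs)].
Proof.
split.
- move=> x y; exact: part1.
- move=> xs ys hx hy; exact: part2.
- move=> xs hx; exact: (@part3 R X Y N hN k xs hx).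
Qed.
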